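(* Let $d\ge1$, $\alpha\in\mathbb{N}$, let $H=(V,E)$ be a $d$-hypergraph with no isolated vertex and let $w\colon E\to\mathbb{Z}$ satisfy $w(e)\ne0$ for all $e\in E$. Define $g(0)=1$ and $g(i)=\big(i^{i}\cdot 2\alpha\cdot 2^{2^d}\big)^{2^i-1}$ for $i>0$. Suppose there is a set $c$ with $c\subseteq e$ for some $e\in E$ such that (i) $|\mathrm{link}(c)|\ge g(d-|c|)$, and (ii) for every set $f$ with $c\subsetneq f\subseteq V$ and $|f|\le d$ we have $|\mathrm{link}(f)|<g(d-|f|)$. Then there is a set $X\subseteq V$ with $|w[X]|\ge\alpha$.
   Context: A $d$-hypergraph $H=(V,E)$ has a vertex set $V$ and a set $E$ of edges, each $e\subseteq V$ with $|e|\le d$ (the empty set may be an edge). A vertex is isolated if it lies in no edge. For $c\subseteq V$, $\mathrm{link}(c)=\{e\in E: c\subsetneq e\}$. For $X\subseteq V$, $E[X]=\{e\in E: e\subseteq X\}$ and $w[X]=\sum_{e\in E[X]}w(e)$. *)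

(* Defs.v *)
From mathcomp Require Import all_boot all_order all_algebra.
Set Implicit Arguments. Unset Strict Implicit. Unset Printing Implicit Defensive.
Import Order.TTheory GRing.Theory Num.Theory.

Definition is_hypergraph (V : finType) (d : nat) (E : {set {set V}}) : Prop :=
  forall e, e \in E -> #|e| <= d.

Definition no_isolated (V : finType) (E : {set {set V}}) : Prop :=
  forall v : V, exists2 e, e \in E & v \in e.

Definition link (V : finType) (E : {set {set V}}) (c : {set V}) : {set {set V}} :=
  [set e in E | c \proper e].

Definition wsum (V : finType) (E : {set {set V}}) (w : {set V} -> int) (X : {set V}) : int :=
  (\sum_(e in E | e \subset X) w e)%R.

Definition gfun (alpha d i : nat) : nat :=
  if i == 0 then 1 else (i ^ i * (2 * alpha) * 2 ^ (2 ^ d)) ^ (2 ^ i - 1).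

(* Main.v *)
Require Import Defs.
From mathcomp Require Import all_boot all_order all_algebra.
From mathcomp Require Import zify ring.
Import Order.TTheory GRing.Theory Num.Theory.
Set Implicit Arguments. Unset Strict Implicit.

Lemma card_bigcup_le (T I : finType) (J : {set I}) (F : I -> {set T}) :
  #|\bigcup_(j in J) F j| <= \sum_(j in J) #|F j|.
Proof.
apply: (big_ind2 (fun (a : {set T}) b => #|a| <= b)) => //.
- by rewrite cards0.
- move=> a1 b1 a2 b2 h1 h2; apply: leq_trans (leq_card_setU _ _) _.
  exact: leq_add.
Qed.

Lemma card_bigcup_const (T I : finType) (J : {set I}) (F : I -> {set T}) K :
  (forall j, j \in J -> #|F j| <= K) -> #|\bigcup_(j in J) F j| <= #|J| * K.
Proof.
move=> h; apply: leq_trans (card_bigcup_le J F) _.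
rewrite -sum_nat_const; exact: leq_sum.
Qed.

Lemma wsum_split (V : finType) (E : {set {set V}}) w (C : {set V}) x Y :
  wsum [set e in E | C \subset e] w (x |: Y) =
  (wsum [set e in E | (x |: C) \subset e] w (x |: Y) +
   wsum [set e in E | C \subset e] w (Y :\ x))%R.
Proof.
rewrite /wsum [in LHS](bigID (fun e : {set V} => x \in e)) /=; congr (_ + _)%R.
  apply: eq_bigl => e; rewrite !inE subUset sub1set.
  by case: (x \in e); rewrite ?andbT ?andbF.
apply: eq_bigl => e; rewrite !inE subsetD1.
case xe: (x \in e); rewrite ?andbF ?andbT //=.
congr (_ && _); apply/idP/idP => h.
  apply/subsetP => y ye; move: (subsetP h y ye); rewrite inE.
  by case/orP => // /set1P yx; rewrite -yx ye in xe.
by apply: (subset_trans h); apply/subsetP=> y yY; rewrite inE yY orbT.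
Qed.

Lemma deriv (V : finType) (E : {set {set V}}) w (alpha : nat) :
  0 < alpha ->
  (forall X, (`|wsum E w X| < alpha%:Z)%R) ->
  forall n (C : {set V}), #|C| = n -> forall Y,
  (`|wsum [set e in E | C \subset e] w Y| < (2 ^ n * alpha)%:Z)%R.
Proof.
move=> a0 H; elim=> [|n IH] C hC Y.
  move/eqP: hC; rewrite cards_eq0 => /eqP ->; rewrite mul1n.
  have -> : [set e in E | set0 \subset e] = E by apply/setP => e; rewrite inE sub0set andbT.
  exact: H.
have [x xC] : exists x, x \in C by apply/set0Pn; rewrite -card_gt0 hC.
have hC' : #|C :\ x| = n by move: hC; rewrite (cardsD1 x C) xC add1n => -[].
have eC : C = x |: (C :\ x) by rewrite setD1K.
have bnd : (0 <= (2 ^ n * alpha)%:Z)%R by [].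
case xY: (x \in Y); last first.
  rewrite /wsum big_pred0; first by rewrite normr0 ltz_nat muln_gt0 expn_gt0 a0.
  move=> e; rewrite inE; apply/negbTE; apply/negP => /andP[/andP[_ Ce] eY].
  by move: (subsetP (subset_trans Ce eY) x xC); rewrite xY.
have eY : Y = x |: Y by apply/esym/setUidPr; rewrite sub1set.
rewrite eY eC.
have := wsum_split E w (C :\ x) x Y.
move=> h; have -> : wsum [set e in E | (x |: (C :\ x)) \subset e] w (x |: Y) =
   (wsum [set e in E | C :\ x \subset e] w (x |: Y) - wsum [set e in E | C :\ x \subset e] w (Y :\ x))%R.
  by rewrite h addrK.
apply: (le_lt_trans (ler_normB _ _)).
rewrite expnS -mulnA mul2n -addnn PoszD.
by apply: ltrD; apply: IH.
Qed.

Lemma indep (T : finType) (rel : T -> T -> bool) (K : nat) :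
  (forall x y, rel x y = rel y x) ->
  forall (S : {set T}),
  (forall x, x \in S -> rel x x) ->
  (forall x, x \in S -> #|[set y in S | rel x y]| <= K) ->
  exists I : {set T}, [/\ I \subset S,
     (forall x y, x \in I -> y \in I -> x != y -> ~~ rel x y) &
     #|S| <= #|I| * K].
Proof.
move=> sym S0.
have [n] := ubnP #|S0|; elim: n S0 => // n IH S hS refl deg.
have [S0|[x xS]] := set_0Vmem S.
  by exists set0; rewrite S0 sub0set cards0; split=> // ? ?; rewrite inE.
set N := [set y in S | rel x y].
set S' := S :\: N.
have xN : x \in N by rewrite inE xS refl.
have sS' : S' \subset S by apply: subsetDl.
have hS' : #|S'| < n.
  rewrite -ltnS; apply: leq_trans hS; rewrite ltnS.
  by apply: proper_card; apply/properP; split=> //; exists x => //; rewrite inE xN.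
have sub : forall y, [set z in S' | rel y z] \subset [set z in S | rel y z].
  by move=> y; apply/subsetP=> z; rewrite !inE => /andP[/andP[_ ->] ->].
have [I [IS' Iind IS]] := IH S' hS' (fun y yS => refl y (subsetP sS' y yS))
   (fun y yS => leq_trans (subset_leq_card (sub y)) (deg y (subsetP sS' y yS))).
have xI : x \notin I by apply/negP => /(subsetP IS'); rewrite inE xN.
exists (x |: I); split.
- by rewrite subUset sub1set xS (subset_trans IS' sS').
- have nx : forall y, y \in I -> ~~ rel x y.
    by move=> y /(subsetP IS'); rewrite !inE => /andP[/negP h yS]; apply/negP => r; apply: h; rewrite yS r.
  move=> a b; rewrite !inE => /orP[/eqP->|aI] /orP[/eqP->|bI]; rewrite ?eqxx //.
  + by move=> _; apply: nx.
  + by move=> _; rewrite sym; apply: nx.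
  + exact: Iind.
- rewrite cardsU1 xI add1n mulSn.
  have -> : #|S| = #|N| + #|S'|.
    rewrite -(cardsID N S) (setIidPr _) //.
    by apply/subsetP => y; rewrite inE => /andP[].
  by rewrite leq_add // deg.
Qed.

Lemma pow_le_pow2 d : 2 ^ d <= 2 ^ (2 ^ d).
Proof. by rewrite leq_exp2l // ltnW // ltn_expl. Qed.

Lemma garith alpha d i : 0 < alpha -> 0 < i ->
  2 ^ d.+1 * alpha * ((i * gfun alpha d i.-1) * (i * gfun alpha d i.-1)) <= gfun alpha d i.
Proof.
move=> a0; case: i => // -[_|k _].
  rewrite /gfun /= (_ : 2^1-1 = 1) // expn1 exp1n expnS; have := pow_le_pow2 d; nia.
rewrite /gfun /=.
set B := (k.+2 ^ k.+2 * (2 * alpha) * 2 ^ 2 ^ d).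
set B' := (k.+1 ^ k.+1 * (2 * alpha) * 2 ^ 2 ^ d).
set m := 2 ^ k.+1 - 1.
have m0 : 0 < m by rewrite /m subn_gt0 -{1}(expn0 2) ltn_exp2l.
have em : 2 ^ k.+2 - 1 = (m + m).+1.
  rewrite /m expnS mul2n -addnn. have := expn_gt0 2 k.+1. lia.
rewrite em [B ^ _.+1]expnS expnD.
have BB : B' ^ m <= B ^ m.
  rewrite leq_exp2r // /B /B' leq_mul2r leq_mul2r.
  rewrite (@leq_trans (k.+2 ^ k.+1)) ?leq_exp2r // ?leq_pexp2l //.
  by rewrite !orbT.
have kk : k.+2 * k.+2 <= k.+2 ^ k.+2.
  by rewrite mulnn leq_pexp2l.
have B1 : 2 ^ d.+1 * alpha * (k.+2 * k.+2) <= B.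
  have := pow_le_pow2 d; rewrite /B expnS => h.
  rewrite (_ : 2 * 2 ^ d * alpha * (k.+2 * k.+2) = (k.+2 * k.+2) * (2 * alpha) * 2 ^ d); last by ring.
  by rewrite leq_mul // leq_mul.
move: BB B1; set X := B' ^ m; set Y := B ^ m; set P := 2 ^ d.+1 * alpha => BB B1.
rewrite (_ : P * (k.+2 * X * (k.+2 * X)) = (P * (k.+2 * k.+2)) * (X * X)); last by ring.
by apply: leq_mul => //; apply: leq_mul.
Qed.

Lemma sum_setU (T : finType) (A B : {set T}) (F : T -> int) :
  [disjoint A & B] -> (\sum_(i in A :|: B) F i = \sum_(i in A) F i + \sum_(i in B) F i)%R.
Proof. by move=> dj; rewrite -bigU //; apply: eq_bigl => x; rewrite !inE. Qed.

Lemma gfun_gt0 alpha d j : 0 < alpha -> 0 < gfun alpha d j.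
Proof.
move=> a0; rewrite /gfun; case: eqP => // /eqP j0.
by rewrite expn_gt0 !muln_gt0 !expn_gt0 lt0n j0 a0.
Qed.

Theorem lemma10 (V : finType) (d alpha : nat) (E : {set {set V}})
    (w : {set V} -> int) :
  1 <= d ->
  is_hypergraph d E ->
  no_isolated E ->
  (forall e, e \in E -> w e != 0%R) ->
  (exists c : {set V},
      [/\ (exists2 e, e \in E & c \subset e),
          gfun alpha d (d - #|c|) <= #|link E c| &
          (forall f : {set V}, c \proper f -> #|f| <= d ->
             #|link E f| < gfun alpha d (d - #|f|))]) ->
  exists X : {set V}, (alpha%:Z <= `|wsum E w X|)%R.
Proof.
move=> d1 hyp _ wnz [c [_ hlink hsub]].
case: (posnP alpha) => [->|a0]; first by exists set0; rewrite normr_ge0.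
case: (boolP [exists X, (alpha%:Z <= `|wsum E w X|)%R]) => [/existsP [X hX]|]; first by exists X.
rewrite negb_exists => /forallP hall.
have H : forall X, (`|wsum E w X| < alpha%:Z)%R by move=> X; rewrite ltNge; exact: hall X.
exfalso.
set P := link E c in hlink.
have hP : forall p, p \in P -> p \in E /\ c \proper p by move=> p; rewrite inE => /andP[].
have cd : #|c| < d.
  rewrite ltnNge; apply/negP => dc.
  move: hlink; rewrite (_ : d - #|c| = 0); last by apply/eqP; rewrite subn_eq0.
  rewrite /gfun eqxx card_gt0 => /set0Pn [p /hP [pE cp]].
  have := proper_card cp; have := hyp p pE; lia.
move: hlink; set i := d - #|c| => hlink.
have i0 : 0 < i by rewrite subn_gt0.
set D := gfun alpha d i.-1.
have deg : forall v, v \notin c -> #|[set r in P | v \in r]| <= D.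
  move=> v vc.
  have cv : #|v |: c| = #|c|.+1 by rewrite cardsU1 vc.
  have sc : c \proper v |: c.
    by rewrite properEcard cv ltnSn andbT; apply/subsetP=> y yc; rewrite inE yc orbT.
  have hl : #|link E (v |: c)| < gfun alpha d (d - #|v |: c|) by apply: hsub; rewrite ?cv.
  rewrite cv subnS -/i in hl.
  apply: (@leq_trans #|(v |: c) |: link E (v |: c)|).
    apply: subset_leq_card; apply/subsetP => r; rewrite inE => /andP[rP vr].
    have [rE cr] := hP r rP.
    rewrite !inE; case: eqP => //= ne; rewrite rE /= properEneq.
    apply/andP; split; first by apply/eqP => h; apply: ne.
    by rewrite subUset sub1set vr (proper_sub cr).
  by rewrite cardsU1; case: (_ \notin _); rewrite -/D in hl; rewrite ?add1n ?add0n // ltnW.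
have sizeP : forall p, p \in P -> #|p :\: c| <= i.
  move=> p /hP [pE cp]; rewrite cardsD (setIidPr (proper_sub cp)).
  have := hyp p pE; rewrite /i; lia.
pose conf (p q : {set V}) := [exists r in P, (r :&: (p :\: c) != set0) && (r :&: (q :\: c) != set0)].
have csym : forall p q, conf p q = conf q p.
  move=> p q; apply/existsP/existsP => -[r /andP[rP /andP[h1 h2]]]; exists r; by rewrite rP h1 h2.
have nonemp : forall p, p \in P -> p :\: c != set0.
  by move=> p /hP [_ cp]; rewrite setD_eq0; move: cp; rewrite properE => /andP[].
have crefl : forall p, p \in P -> conf p p.
  move=> p pP; apply/existsP; exists p; rewrite pP /=.
  by rewrite (setIidPr (subsetDl _ _)) nonemp.
set K := i * D * (i * D).
have cdeg : forall p, p \in P -> #|[set q in P | conf p q]| <= K.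
  move=> p pP.
  apply: (@leq_trans #|\bigcup_(v in p :\: c) \bigcup_(r in [set r in P | v \in r])
        \bigcup_(u in r :\: c) [set q in P | u \in q]|).
    apply: subset_leq_card; apply/subsetP => q; rewrite inE => /andP[qP /existsP [r /andP[rP /andP[h1 h2]]]].
    case/set0Pn: h1 => v; rewrite inE => /andP[vr vp].
    case/set0Pn: h2 => u; rewrite inE => /andP[ur uq].
    apply/bigcupP; exists v => //; apply/bigcupP; exists r; first by rewrite inE rP vr.
    apply/bigcupP; exists u; first by rewrite inE (setDP uq).2 ur.
    by rewrite inE qP (setDP uq).1.
  rewrite /K -mulnA; apply: leq_trans (@card_bigcup_const _ _ _ _ (D * (i * D)) _) _; last first.
    by rewrite leq_mul2r sizeP ?orbT.
  move=> v; rewrite inE => /andP[vc vp].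
  apply: leq_trans (@card_bigcup_const _ _ _ _ (i * D) _) _; last by rewrite leq_mul2r deg ?orbT.
  move=> r; rewrite inE => /andP[rP vr].
  apply: leq_trans (@card_bigcup_const _ _ _ _ D _) _; last by rewrite leq_mul2r sizeP ?orbT.
  move=> u; rewrite inE => /andP[uc ur]; exact: deg.
have [I [IP Iind IPcard]] := indep csym crefl cdeg.
pose m (p : {set V}) := [arg min_(r < p | (r \in P) && (r \subset p)) #|r|].
have mP : forall p, p \in P -> [/\ m p \in P, m p \subset p & forall r, r \in P -> r \subset m p -> r = m p].
  move=> p pP; rewrite /m; case: arg_minnP => [|r /andP[rP rp] hmin]; first by rewrite pP subxx.
  split => // r' r'P r'r; apply/eqP; rewrite eqEcard r'r /=; apply: hmin.
  by rewrite r'P (subset_trans r'r rp).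
have Pc : forall p, p \in P -> c \subset p by move=> p /hP [_ /proper_sub].
have minj : {in I &, injective m}.
  move=> p q pI qI mpq; apply/eqP; apply/negPn/negP => pq.
  have pP := subsetP IP p pI; have qP := subsetP IP q qI.
  have [mpP mpp _] := mP p pP; have [_ mqq _] := mP q qP.
  move: (Iind p q pI qI pq); apply/negP/negPn/existsP; exists (m p); rewrite mpP /=.
  case/set0Pn: (nonemp _ mpP) => u; rewrite inE => /andP[uc um].
  apply/andP; split; apply/set0Pn; exists u; rewrite !inE uc um /=.
    exact: (subsetP mpp).
  by rewrite mpq in um; exact: (subsetP mqq).
set Ec := [set e in E | c \subset e].
have key : forall J : {set {set V}}, J \subset I ->
    wsum Ec w (c :|: \bigcup_(p in J) m p) = (wsum Ec w c + \sum_(p in J) w (m p))%R.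
  move=> J JI; set U := c :|: _.
  have Sdef : [set e in Ec | e \subset U] = [set e in Ec | e \subset c] :|: m @: J.
    apply/setP => e; rewrite !inE; apply/idP/idP.
    - case/andP => /andP[eE ce] eU. case ec: (e \subset c); first by rewrite eE ce.
      apply/orP; right.
      have eP : e \in P by rewrite inE eE properE ce ec.
      case/set0Pn: (nonemp e eP) => u; rewrite inE => /andP[uc ue].
      have: u \in U := subsetP eU u ue.
      rewrite inE (negbTE uc) /= => /bigcupP [p pJ up].
      have pP := subsetP IP p (subsetP JI p pJ).
      have [mpP mpp mmin] := mP p pP.
      apply/imsetP; exists p => //; apply: mmin => //.
      apply/subsetP => y ye. case yc: (y \in c); first exact: subsetP (Pc _ mpP) y yc.
      have: y \in U := subsetP eU y ye.
      rewrite inE yc /= => /bigcupP [q qJ yq].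
      case: (eqVneq p q) => [-> //|pq].
      have qP := subsetP IP q (subsetP JI q qJ). have [_ mqq _] := mP q qP.
      exfalso; move: (Iind p q (subsetP JI p pJ) (subsetP JI q qJ) pq).
      apply/negP/negPn/existsP; exists e; rewrite eP /=.
      apply/andP; split; apply/set0Pn; [exists u | exists y]; rewrite !inE ?uc ?yc ?ue ?ye /=.
        exact: subsetP mpp u up.
      exact: subsetP mqq y yq.
    - case/orP => [/andP[/andP[eE ce] ec] | /imsetP [p pJ ->]].
        by rewrite eE ce /=; apply: subset_trans ec (subsetUl _ _).
      have [mpP _ _] := mP p (subsetP IP p (subsetP JI p pJ)).
      have [mE _] := hP _ mpP.
      rewrite mE Pc //=; apply/subsetP => y ym; rewrite inE; apply/orP; right.
      by apply/bigcupP; exists p.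
  have disj : [disjoint [set e in Ec | e \subset c] & m @: J].
    rewrite -setI_eq0; apply/eqP/setP => e; rewrite !inE; apply/negP.
    move=> /andP[/andP[/andP[_ ce] ec] /imsetP[p pJ ep]].
    have [mpP _ _] := mP p (subsetP IP p (subsetP JI p pJ)).
    have [_ cp] := hP _ mpP.
    by move: cp; rewrite -ep properE ec andbF.
  rewrite /wsum (eq_bigl (fun e => e \in [set e in Ec | e \subset U])); last by move=> e; rewrite inE.
  rewrite Sdef sum_setU // big_imset; last by move=> p q pJ qJ; apply: minj; exact: (subsetP JI).
  by congr (_ + _)%R; apply: eq_bigl => e; rewrite inE.
set A := 2 ^ #|c| * alpha.
have dv : forall Y, (`|wsum Ec w Y| < A%:Z)%R by move=> Y; exact: (deriv a0 H (erefl #|c|)).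
have Jb : forall J : {set {set V}}, J \subset I ->
    (#|J|%:Z <= `|\sum_(p in J) w (m p)|)%R -> #|J| < 2 * A.
  move=> J JI hJ.
  have hS : (\sum_(p in J) w (m p) = wsum Ec w (c :|: \bigcup_(p in J) m p) - wsum Ec w c)%R.
    by rewrite key // addrAC subrr add0r.
  rewrite -ltz_nat mul2n -addnn PoszD; apply: le_lt_trans hJ _; rewrite hS.
  by apply: le_lt_trans (ler_normB _ _) _; apply: ltrD; apply: dv.
set B := [set p : {set V} | (0 < w (m p))%R].
have wm : forall p, p \in I -> w (m p) != 0%R.
  move=> p pI; have [mpP _ _] := mP p (subsetP IP p pI); have [mE _] := hP _ mpP; exact: wnz.
have bpos : #|I :&: B| < 2 * A.
  apply: Jb; first exact: subsetIl.
  apply: le_trans (ler_norm _); rewrite -natz -sumr_const; apply: ler_sum => p.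
  by rewrite !inE => /andP[_ h]; rewrite -gtz0_ge1.
have bneg : #|I :\: B| < 2 * A.
  apply: Jb; first exact: subsetDl.
  rewrite -normrN -sumrN; apply: le_trans (ler_norm _); rewrite -natz -sumr_const; apply: ler_sum => p.
  rewrite !inE => /andP[h pI]; rewrite -gtz0_ge1 oppr_gt0 lt_neqAle wm //=.
  by rewrite leNgt.
have Icard : #|I| < 4 * A by rewrite -(cardsID B I); lia.
have Kpos : 0 < K by rewrite /K !muln_gt0 i0 gfun_gt0.
have h1 : #|P| < 4 * A * K by apply: leq_ltn_trans IPcard _; rewrite ltn_mul2r Kpos Icard.
have h2 : 4 * A * K <= 2 ^ d.+1 * alpha * K.
  rewrite leq_mul2r; apply/orP; right; rewrite /A mulnA -[4]/(2^2) -expnD leq_mul2r; apply/orP; right.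
  rewrite leq_exp2l //; lia.
have h3 := garith d a0 i0.
have := leq_trans (leq_ltn_trans hlink h1) (leq_trans h2 h3).
by rewrite ltnn.
Qed.
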